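(* Let $\mathfrak{X}=\mathfrak{X}_{(\Gamma_q,i_q)_q}$ be a Bourgain–Delbaen space, let $\Gamma'$ be a self-determined subset of $\Gamma$, let $\mathfrak{X}'=\mathfrak{X}_{(\Gamma'_{q_s},i'_{q_s})_s}$ be the Bourgain–Delbaen space determined by $\Gamma'$ (as described in the context), and let $Y$ be the closed linear span of $\{d_\gamma:\gamma\in\Gamma\setminus\Gamma'\}$. Then the restriction map $R:\ell_\infty(\Gamma)\to\ell_\infty(\Gamma')$ maps $\mathfrak{X}$ onto $\mathfrak{X}'$ and the kernel of $R|_{\mathfrak{X}}$ is $Y$. Hence $\mathfrak{X}/Y$ is isomorphic to $\mathfrak{X}'$.
   Context: Bourgain–Delbaen spaces: given a strictly increasing sequence $(\Gamma_q)_q$ of non-empty finite sets with union $\Gamma$ and linear extension operators $i_q:\ell_\infty(\Gamma_q)\to\ell_\infty(\Gamma)$ ($i_q(x)|_{\Gamma_q}=x$) with $\sup_q\|i_q\|<\infty$ that are compatible (for $p<q$, $i_p=i_q\circ r_q\circ i_p$, with $r_q$ restriction onto $\Gamma_q$), set $\Delta_1=\Gamma_1$, $\Delta_{q+1}=\Gamma_{q+1}\setminus\Gamma_q$, $d_\gamma=i_q(e_\gamma)$ for $\gamma\in\Delta_q$; $\mathfrak{X}_{(\Gamma_q,i_q)_q}$ is the closed span of $\{d_\gamma\}$ in $\ell_\infty(\Gamma)$. $e_\gamma^*$ denotes evaluation at $\gamma$ restricted to the space, $(d_\gamma^* )$ the functionals biorthogonal to $(d_\gamma)$. An infinite subset $\Gamma'\subseteq\Gamma$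 is self-determined if each $d_\gamma^*$, $\gamma\in\Gamma'$, lies in the linear span of $\{e_\eta^*:\eta\in\Gamma'\}$. For such $\Gamma'$: write $\{q:\Gamma'\cap\Delta_q\neq\varnothing\}=\{q_0<q_1<\cdots\}$, $\Gamma'_q=\Gamma'\cap\Gamma_q$, $R$ = restriction onto $\Gamma'$, and $i'_{q_s}:\ell_\infty(\Gamma'_{q_s})\to\ell_\infty(\Gamma')$, $i'_{q_s}(x)=R(i_{q_s}(x))$ ($x$ extended by zero to $\Gamma_{q_s}$). The sequence $(i'_{q_s})_s$ is a uniformly bounded compatible sequence of extension operators, so it defines the Bourgain–Delbaen space $\mathfrak{X}_{(\Gamma'_{q_s},i'_{q_s})_s}\subseteq\ell_\infty(\Gamma')$. *)

(* Defs.v *)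
From mathcomp Require Import all_boot all_order all_algebra.
From mathcomp Require Import all_classical all_reals.
Set Implicit Arguments. Unset Strict Implicit. Unset Printing Implicit Defensive.
Import Order.TTheory GRing.Theory Num.Theory.
Local Open Scope classical_set_scope.
Local Open Scope ring_scope.

Section BD.
Variables (R : realType) (T : Type).

(* extension by zero of f from D to T; also used for restriction operators *)
Definition zext (D : set T) (f : T -> R) : T -> R :=
  fun t => if t \in D then f t else 0.

Definition evec (g : T) : T -> R := fun t => if t \in [set g] then 1 else 0.

Definition normle (f : T -> R) (M : R) : Prop := forall t, `|f t| <= M.

Definition normle_on (D : set T) (f : T -> R) (M : R) : Prop :=
  forall t, D t -> `|f t| <= M.

Definition Delta (Gam : nat -> set T) (q : nat) : set T :=
  match q with
  | 0 => Gam 0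
  | q'.+1 => Gam q'.+1 `\` Gam q'
  end.

(* w is one of the vectors d_gamma = i_q(e_gamma), gamma in Delta_q, with
   gamma in P *)
Definition is_d (Gam : nat -> set T) (ext : nat -> (T -> R) -> (T -> R))
  (P : set T) (w : T -> R) : Prop :=
  exists g q, P g /\ Delta Gam q g /\ w = ext q (evec g).

Definition in_span Gam ext (P : set T) (v : T -> R) : Prop :=
  exists (n : nat) (a : 'I_n -> R) (w : 'I_n -> T -> R),
    (forall i, is_d Gam ext P (w i)) /\
    v = fun t => \sum_(i < n) a i * w i t.

Definition closed_span Gam ext (P : set T) (x : T -> R) : Prop :=
  forall e : R, 0 < e -> exists v, in_span Gam ext P v /\ normle (x \- v) e.

Definition BDspace Gam ext : set (T -> R) := closed_span Gam ext setT.

(* An operator i_q : l_inf(Gamma_q) -> l_inf(Gamma) is encoded as a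
   map (T -> R) -> (T -> R) depending only on the values on Gamma_q. *)
Definition BD_datum (Gam : nat -> set T) (ext : nat -> (T -> R) -> (T -> R))
  : Prop :=
  (forall q, finite_set (Gam q) /\ Gam q !=set0) /\
      (forall q, Gam q `<` Gam q.+1) /\
      \bigcup_q Gam q = setT /\
      (forall q x, ext q x = ext q (zext (Gam q) x)) /\
      (forall q (a : R) x y, ext q (fun t => a * x t + y t) =
                             (fun t => a * ext q x t + ext q y t)) /\
      (forall q x t, Gam q t -> ext q x t = x t) /\
      (exists C : R, forall q x M, normle_on (Gam q) x M ->
                        normle (ext q x) (C * M)) /\
      (forall p q x, (p < q)%N -> ext p x = ext q (zext (Gam q) (ext p x))).

Definition is_dstar Gam ext (g : T) (f : (T -> R) -> R) : Prop :=
  [/\ (forall (a : R) x y, BDspace Gam ext x -> BDspace Gam ext y ->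
         f (fun t => a * x t + y t) = a * f x + f y),
      (exists C : R, forall x M, BDspace Gam ext x -> normle x M ->
         `|f x| <= C * M) &
      (forall q eta, Delta Gam q eta ->
         f (ext q (evec eta)) = if eta \in [set g] then 1 else 0)].

Definition self_determined Gam ext (G' : set T) : Prop :=
  infinite_set G' /\
  forall g, G' g -> exists f, is_dstar Gam ext g f /\
    exists (n : nat) (a : 'I_n -> R) (eta : 'I_n -> T),
      (forall i, G' (eta i)) /\
      forall x, BDspace Gam ext x -> f x = \sum_(i < n) a i * x (eta i).

Definition enumerates_q (Gam : nat -> set T) (G' : set T) (qs : nat -> nat)
  : Prop :=
  (forall s, (qs s < qs s.+1)%N) /\
  (forall q, (exists g, G' g /\ Delta Gam q g) <-> exists s, qs s = q).

Definition Gam' (Gam : nat -> set T) (G' : set T) (qs : nat -> nat) :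
  nat -> set T := fun s => G' `&` Gam (qs s).

(* i'_{q_s}(x) = R(i_{q_s}(x extended by zero to Gamma_{q_s})); elements of
   l_inf(Gamma') are encoded as functions on T vanishing off Gamma'. *)
Definition ext' (ext : nat -> (T -> R) -> (T -> R)) (Gam : nat -> set T)
  (G' : set T) (qs : nat -> nat) : nat -> (T -> R) -> (T -> R) :=
  fun s x => zext G' (ext (qs s) (zext (Gam' Gam G' qs s) x)).

End BD.

(* Main.v *)
Require Import Defs.
From mathcomp Require Import all_boot all_order all_algebra.
From mathcomp Require Import all_classical all_reals.
From mathcomp Require Import ring lra.
Import Order.TTheory GRing.Theory Num.Theory.
Local Open Scope classical_set_scope.
Local Open Scope ring_scope.

Section Basic.
Variables (R : realType) (T : Type).

Lemma zext_in (D : set T) (f : T -> R) t : D t -> zext D f t = f t.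
Proof. by move=> Dt; rewrite /zext mem_set. Qed.
Lemma zext_out (D : set T) (f : T -> R) t : ~ D t -> zext D f t = 0 :> R.
Proof. by move=> Dt; rewrite /zext memNset. Qed.
Lemma evec_eq (g : T) : evec R g g = 1 :> R.
Proof. by rewrite /evec mem_set. Qed.
Lemma evec_neq (g t : T) : t <> g -> evec R g t = 0 :> R.
Proof. by move=> ne; rewrite /evec memNset. Qed.

Lemma small0 (r : R) : (forall e : R, 0 < e -> `|r| <= e) -> r = 0.
Proof.
move=> H; apply/eqP; rewrite -normr_le0; apply/ler_addgt0Pr => e e0; rewrite add0r.
by apply: H.
Qed.

Lemma in_span0 (Gam0 : nat -> set T) (ext0 : nat -> (T -> R) -> (T -> R)) P :
  in_span Gam0 ext0 P (fun=> 0).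
Proof.
exists 0%N, (fun=> 0), (fun=> fun=> 0); split; first by case.
by apply/funext => t; rewrite big_ord0.
Qed.

Lemma in_span_cons (Gam0 : nat -> set T) (ext0 : nat -> (T -> R) -> (T -> R)) P
  (a : R) w v : is_d Gam0 ext0 P w -> in_span Gam0 ext0 P v ->
  in_span Gam0 ext0 P (fun t => a * w t + v t).
Proof.
move=> Hw [n [a' [w' [Hw' ->]]]].
exists n.+1, (fun i => if unlift ord0 i is Some j then a' j else a),
  (fun i => if unlift ord0 i is Some j then w' j else w); split.
  by move=> i; case: unliftP.
apply/funext => t; rewrite big_ord_recl /= unlift_none; congr (_ + _).
by apply: eq_bigr => i _; rewrite liftK.
Qed.

Lemma mono_step (u : nat -> R) : (forall n, u n <= u n.+1) ->
  forall n m, (n <= m)%N -> u n <= u m.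
Proof.
move=> H n m /subnK <-; elim: (m - n)%N => [|k IH] //=.
by rewrite addSn; apply: le_trans IH (H _).
Qed.

End Basic.
Section BDsec.
Variables (R : realType) (T : choiceType).
Variables (Gam : nat -> set T) (ext : nat -> (T -> R) -> (T -> R)).
Hypothesis HBD : BD_datum Gam ext.

Lemma Gfin q : finite_set (Gam q). Proof. by case: HBD => H _; case: (H q). Qed.
Lemma Gne q : Gam q !=set0. Proof. by case: HBD => H _; case: (H q). Qed.
Lemma Gsub q : Gam q `<` Gam q.+1. Proof. by case: HBD => _ [H _]. Qed.
Lemma Gcov : \bigcup_q Gam q = setT. Proof. by case: HBD => _ [_ [H _]]. Qed.
Lemma extZ q x : ext q x = ext q (zext (Gam q) x).
Proof. by case: HBD => _ [_ [_ [H _]]]. Qed.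
Lemma extL q (a : R) x y : ext q (fun t => a * x t + y t) =
                             (fun t => a * ext q x t + ext q y t).
Proof. by case: HBD => _ [_ [_ [_ [H _]]]]. Qed.
Lemma extE q x t : Gam q t -> ext q x t = x t.
Proof. by case: HBD => _ [_ [_ [_ [_ [H _]]]]]; apply: H. Qed.
Lemma extB : exists C : R, forall q x M, normle_on (Gam q) x M ->
                        normle (ext q x) (C * M).
Proof. by case: HBD => _ [_ [_ [_ [_ [_ [H _]]]]]]. Qed.
Lemma extC p q x : (p < q)%N -> ext p x = ext q (zext (Gam q) (ext p x)).
Proof. by case: HBD => _ [_ [_ [_ [_ [_ [_ H]]]]]]; apply: H. Qed.

Lemma ext_eq q x y : (forall t, Gam q t -> x t = y t) -> ext q x = ext q y.
Proof.
move=> H; rewrite (extZ q x) (extZ q y); congr ext; apply/funext => t.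
by case: (pselect (Gam q t)) => Ht; [rewrite !zext_in // H | rewrite !zext_out].
Qed.

Lemma ext0 q : ext q (fun=> 0) = fun=> 0.
Proof.
have := extL q (-1) (fun=> 0) (fun=> 0).
have -> : (fun _ : T => -1 * 0 + 0) = (fun=> 0 :> R) by apply/funext=> t; rewrite mulr0 addr0.
move=> ->; apply/funext => t; by rewrite mulN1r addNr.
Qed.

Lemma extD q x y : ext q (fun t => x t + y t) = (fun t => ext q x t + ext q y t).
Proof.
have := extL q 1 x y; rewrite (_ : (fun t => 1 * x t + y t) = (fun t => x t + y t)).
  by move=> ->; apply/funext => t; rewrite mul1r.
by apply/funext => t; rewrite mul1r.
Qed.

Lemma extS q a x : ext q (fun t => a * x t) = (fun t => a * ext q x t).
Proof.
have := extL q a x (fun=> 0); rewrite ext0.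
rewrite (_ : (fun t => a * x t + 0) = (fun t => a * x t)).
  by move=> ->; apply/funext => t; rewrite addr0.
by apply/funext => t; rewrite addr0.
Qed.

Lemma ext_sum q (I : Type) (s : seq I) (c : I -> R) (f : I -> T -> R) :
  ext q (fun t => \sum_(i <- s) c i * f i t) =
  (fun t => \sum_(i <- s) c i * ext q (f i) t).
Proof.
elim: s => [|i s IH].
  rewrite (_ : (fun t => _) = fun=> 0); last by apply/funext => t; rewrite big_nil.
  by rewrite ext0; apply/funext => t; rewrite big_nil.
rewrite (_ : (fun t => _) = (fun t => c i * f i t + \sum_(j <- s) c j * f j t)); last first.
  by apply/funext => t; rewrite big_cons.
by rewrite extL IH; apply/funext => t; rewrite big_cons.
Qed.

Lemma ext_idem q x : ext q (ext q x) = ext q x.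
Proof. by apply: ext_eq => t Ht; rewrite extE. Qed.

Lemma Gmono p q : (p <= q)%N -> Gam p `<=` Gam q.
Proof.
move=> /subnK <-; elim: (q - p)%N => [|n IH] //= t Ht.
by rewrite addSn; apply: (properW (Gsub _)); apply: IH.
Qed.

Lemma lev_ex t : exists q, `[< Gam q t >].
Proof.
have : (\bigcup_q Gam q) t by rewrite Gcov.
by case=> q _ Hq; exists q; apply/asboolP.
Qed.

Definition lev t := ex_minn (lev_ex t).

Lemma Glev t : Gam (lev t) t.
Proof. by rewrite /lev; case: ex_minnP => m /asboolP. Qed.

Lemma lev_min t q : Gam q t -> (lev t <= q)%N.
Proof. by rewrite /lev; case: ex_minnP => m _ H /asboolP /H. Qed.

Lemma Gam_lev t q : Gam q t <-> (lev t <= q)%N.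
Proof. by split; [apply: lev_min | move=> H; exact: (Gmono _ _ H _ (Glev t))]. Qed.

Lemma Delta_lev q t : Delta Gam q t <-> lev t = q.
Proof.
case: q => [|q] /=; first by rewrite Gam_lev leqn0; split => [/eqP|->].
rewrite /setD /= Gam_lev [Gam q t]Gam_lev; split.
  by case=> H1 H2; apply/eqP; rewrite eqn_leq H1 /= ltnNge; apply/negP.
by move=> ->; split => //; rewrite ltnn.
Qed.

Definition d g := ext (lev g) (evec R g).

Lemma is_dE P w : is_d Gam ext P w <-> exists g, P g /\ w = d g.
Proof.
split.
  by case=> g [q [Pg [/Delta_lev Hq ->]]]; exists g; split => //; rewrite /d Hq.
by case=> g [Pg ->]; exists g, (lev g); split => //; split => //; apply/Delta_lev.
Qed.

Lemma d_on g t : (lev t <= lev g)%N -> d g t = evec R g t.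
Proof. by move=> H; rewrite /d extE //; apply/Gam_lev. Qed.

Lemma d_diag g : d g g = 1.
Proof. by rewrite d_on // evec_eq. Qed.

Lemma ext_d_le Q g : (lev g <= Q)%N -> ext Q (d g) = d g.
Proof.
rewrite leq_eqVlt => /orP [/eqP <-|H]; first by rewrite /d ext_idem.
by rewrite {2}/d (extC _ _ _ H) -extZ.
Qed.

Lemma ext_d_gt Q g : (Q < lev g)%N -> ext Q (d g) = fun=> 0.
Proof.
move=> H; rewrite -(ext0 Q); apply: ext_eq => t /Gam_lev Ht.
rewrite d_on; last by apply: leq_trans (ltnW H).
by apply: evec_neq => E; move: H; rewrite -E ltnNge Ht.
Qed.


Lemma evec_sym (a b : T) : evec R a b = evec R b a.
Proof.
case: (pselect (a = b)) => [->//|ne].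
by rewrite !evec_neq // => E; apply: ne.
Qed.

Lemma en_ex q : exists s : seq T, uniq s /\ forall t, Gam q t <-> t \in s.
Proof.
have /finite_seqP [s Hs] := Gfin q.
exists (undup s); split; first exact: undup_uniq.
by move=> t; rewrite mem_undup Hs.
Qed.

Definition en q : seq T := projT1 (cid (en_ex q)).
Lemma en_uniq q : uniq (en q). Proof. exact: (proj1 (projT2 (cid (en_ex q)))). Qed.
Lemma en_mem q t : Gam q t <-> t \in en q.
Proof. exact: (proj2 (projT2 (cid (en_ex q))) t). Qed.

Lemma zext_dec q (x : T -> R) :
  zext (Gam q) x = fun t => \sum_(u <- en q) x u * evec R u t.
Proof.
apply/funext => t; case: (pselect (Gam q t)) => Ht.
  have tin : t \in en q by apply/en_mem.
  rewrite zext_in // (bigD1_seq t tin (en_uniq q)) /= evec_eq mulr1 big1 ?addr0 // => u /eqP ne.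
  by rewrite evec_neq ?mulr0 // => E; apply: ne.
rewrite zext_out // big_seq big1 // => u /en_mem Hu.
by rewrite evec_neq ?mulr0 // => E; apply: Ht; rewrite E.
Qed.

Lemma ext_dec q x : ext q x = fun t => \sum_(u <- en q) x u * ext q (evec R u) t.
Proof. by rewrite extZ zext_dec ext_sum. Qed.

Definition dsum (s : seq (R * T)) : T -> R := fun t => \sum_(p <- s) p.1 * d p.2 t.
Definition ev (s : seq (R * T)) (h : T -> R) : R := \sum_(p <- s) p.1 * h p.2.
Definition negs (s : seq (R * T)) := [seq (- p.1, p.2) | p <- s].

Lemma dsum_nil : dsum [::] = fun=> 0.
Proof. by apply/funext => t; rewrite /dsum big_nil. Qed.
Lemma dsum_cons p s : dsum (p :: s) = fun t => p.1 * d p.2 t + dsum s t.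
Proof. by apply/funext => t; rewrite /dsum big_cons. Qed.
Lemma dsum_cat s1 s2 : dsum (s1 ++ s2) = fun t => dsum s1 t + dsum s2 t.
Proof. by apply/funext => t; rewrite /dsum big_cat. Qed.
Lemma dsum_negs s : dsum (negs s) = fun t => - dsum s t.
Proof.
by apply/funext => t; rewrite /dsum big_map -sumrN; apply: eq_bigr => p _; rewrite mulNr.
Qed.
Lemma ev_cat s1 s2 h : ev (s1 ++ s2) h = ev s1 h + ev s2 h.
Proof. by rewrite /ev big_cat. Qed.
Lemma ev_negs s h : ev (negs s) h = - ev s h.
Proof. by rewrite /ev big_map -sumrN; apply: eq_bigr => p _; rewrite mulNr. Qed.
Lemma ev_sub s x y : ev s (fun t => x t - y t) = ev s x - ev s y.
Proof. by rewrite /ev -sumrB; apply: eq_bigr => p _; rewrite mulrBr. Qed.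

Lemma spanP P v : in_span Gam ext P v <->
  exists s, (forall p, p \in s -> P p.2) /\ v = dsum s.
Proof.
split.
  case=> n [a [w [Hw ->]]].
  have /choice [g Hg] : forall i, exists g, P g /\ w i = d g by move=> i; apply/is_dE.
  exists [seq (a i, g i) | i <- enum 'I_n]; split.
    by move=> p /mapP [i _ ->] /=; case: (Hg i).
  apply/funext => t; rewrite /dsum big_map big_enum /=; apply: eq_bigr => i _.
  by case: (Hg i) => _ ->.
case=> s [Hs ->]; have [t0 _] := Gne 0.
exists (size s), (fun i => (nth (0, t0) s i).1), (fun i => d (nth (0, t0) s i).2).
split.
  move=> i; apply/is_dE; exists (nth (0, t0) s i).2; split => //.
  by apply: Hs; apply: mem_nth.
by apply/funext => t; rewrite /dsum (big_nth (0, t0)) big_mkord.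
Qed.

Lemma span_closed P v : in_span Gam ext P v -> closed_span Gam ext P v.
Proof.
move=> Hv e e0; exists v; split => // t.
by rewrite /= subrr normr0 ltW.
Qed.

Lemma dsum_span s : BDspace Gam ext (dsum s).
Proof. by apply: span_closed; apply/spanP; exists s. Qed.

Lemma ext_dsum Q s : (forall p, p \in s -> (lev p.2 <= Q)%N) -> ext Q (dsum s) = dsum s.
Proof.
move=> H; rewrite /dsum ext_sum; apply/funext => t.
by apply: eq_big_seq => p /H Hp; rewrite ext_d_le.
Qed.

Lemma ext_span Q x : exists s, (forall p, p \in s -> (lev p.2 <= Q)%N) /\ ext Q x = dsum s.
Proof.
elim: Q x => [|Q IH] x.
  exists [seq (x u, u) | u <- en 0]; split.
    by move=> p /mapP [u /en_mem Hu ->] /=; apply: lev_min.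
  rewrite ext_dec /dsum; apply/funext => t; rewrite big_map.
  apply: eq_big_seq => u /en_mem Hu /=; congr (_ * _); rewrite /d.
  by have -> : lev u = 0%N by apply/eqP; rewrite -leqn0; apply: lev_min.
have [s1 [H1 E1]] := IH x.
pose y := fun t => x t - ext Q x t.
have Ex : ext Q.+1 x = fun t => ext Q x t + ext Q.+1 y t.
  rewrite {1}(_ : x = fun t => ext Q x t + y t); last first.
    by apply/funext => t; rewrite /y addrC subrK.
  rewrite extD; have -> // : ext Q.+1 (ext Q x) = ext Q x.
  by rewrite [LHS]extZ -(extC _ _ _ (ltnSn Q)).
exists (s1 ++ [seq (y u, u) | u <- en Q.+1]); split.
  move=> p; rewrite mem_cat => /orP [/H1 Hp|/mapP [u /en_mem Hu ->] /=].
    by apply: leq_trans Hp _.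
  by apply: lev_min.
rewrite Ex dsum_cat -E1; apply/funext => t; congr (_ + _).
rewrite ext_dec /dsum big_map; apply: eq_big_seq => u /en_mem Hu /=.
case: (pselect (Gam Q u)) => HQ.
  by rewrite /y extE // subrr !mul0r.
congr (_ * _); rewrite /d.
have -> // : lev u = Q.+1 by apply/(Delta_lev Q.+1).
Qed.

Definition Df (g : T) (h : T -> R) : R :=
  h g - (if lev g is l.+1 then ext l h g else 0).

Lemma Df_below g h : (forall t, (lev t < lev g)%N -> h t = 0) -> Df g h = h g.
Proof.
move=> H; rewrite /Df; case E: (lev g) => [|l]; first by rewrite subr0.
rewrite (ext_eq l h (fun=> 0)) ?ext0 ?subr0 // => t /Gam_lev Ht.
by apply: H; rewrite E ltnS.
Qed.

Lemma Df_local g h : (forall t, (lev t <= lev g)%N -> h t = 0) -> Df g h = 0.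
Proof.
move=> H; rewrite Df_below; first exact: H.
by move=> t Ht; apply: H; apply: ltnW.
Qed.

Lemma Df_lin g a x y : Df g (fun t => a * x t + y t) = a * Df g x + Df g y.
Proof. rewrite /Df; case: (lev g) => [|l]; rewrite ?extL /=; ring. Qed.

Lemma Df0 g : Df g (fun=> 0) = 0.
Proof. by apply: Df_local. Qed.

Lemma Df_sum g (I : Type) (s : seq I) (c : I -> R) (f : I -> T -> R) :
  Df g (fun t => \sum_(i <- s) c i * f i t) = \sum_(i <- s) c i * Df g (f i).
Proof.
elim: s => [|i s IH].
  rewrite (_ : (fun t => _) = fun=> 0); last by apply/funext => t; rewrite big_nil.
  by rewrite Df0 big_nil.
rewrite (_ : (fun t => _) = (fun t => c i * f i t + \sum_(j <- s) c j * f j t)); last first.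
  by apply/funext => t; rewrite big_cons.
by rewrite Df_lin IH big_cons.
Qed.

Lemma Df_d dl g : Df dl (d g) = evec R dl g.
Proof.
case: (ltnP (lev g) (lev dl)) => H.
  have ne : g <> dl by move=> E; move: H; rewrite E ltnn.
  rewrite evec_neq //; rewrite /Df; move: H; case: (lev dl) => [//|l] H.
  by rewrite ext_d_le ?subrr.
rewrite Df_below.
  by rewrite d_on // evec_sym.
move=> t Ht; rewrite d_on; last by apply: leq_trans (ltnW Ht) H.
by apply: evec_neq => E; move: Ht; rewrite E ltnNge H.
Qed.

Lemma Df_dsum dl s : Df dl (dsum s) = ev s (evec R dl).
Proof. by rewrite /dsum Df_sum /ev; apply: eq_bigr => p _; rewrite Df_d. Qed.

Lemma Df_ev dl : exists sD, forall h, Df dl h = ev sD h.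
Proof.
rewrite /Df; case: (lev dl) => [|l].
  by exists [:: (1, dl)] => h; rewrite /ev big_cons big_nil subr0 mul1r addr0.
exists ((1, dl) :: [seq (- ext l (evec R u) dl, u) | u <- en l]) => h.
rewrite /ev big_cons big_map mul1r ext_dec -sumrN; congr (_ + _).
by apply: eq_bigr => u _ /=; rewrite mulNr mulrC.
Qed.

Lemma ext_expand Q x :
  ext Q x = fun t => \sum_(dl <- en Q) Df dl (ext Q x) * d dl t.
Proof.
have [s [Hs ->]] := ext_span Q x; apply/funext => t.
under [RHS]eq_bigr do rewrite Df_dsum /ev mulr_suml.
rewrite exchange_big /dsum /=; apply: eq_big_seq => p /Hs /Gam_lev /en_mem Hp.
rewrite (bigD1_seq p.2) ?en_uniq //= evec_eq mulr1 big1 ?addr0 // => u /eqP ne.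
by rewrite evec_neq ?mulr0 ?mul0r // => E; apply: ne.
Qed.

Section Uniq.
Variable s : seq (R * T).
Let B t := ev s (evec R t).
Let m t := \sum_(p <- s) evec R p.2 t.

Lemma m_gt0 q : q \in s -> 0 < m q.2.
Proof.
move=> Hq; rewrite /m (big_rem q) //= evec_eq.
apply: (lt_le_trans ltr01); rewrite lerDl; apply: sumr_ge0 => p _.
by rewrite /evec; case: ifP.
Qed.

Lemma grouping u : ev s u = \sum_(p <- s) (u p.2 / m p.2) * B p.2.
Proof.
rewrite /B /ev; under [RHS]eq_bigr do rewrite mulr_sumr.
rewrite exchange_big /=; apply: eq_big_seq => q Hq.
transitivity (\sum_(p <- s) (u q.2 / m q.2) * (q.1 * evec R p.2 q.2)).
  rewrite -mulr_sumr -mulr_sumr -/(m q.2).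
  have := m_gt0 q Hq; move: (m q.2) => mm mm0; field; exact: lt0r_neq0.
apply: eq_bigr => p _; case: (pselect (p.2 = q.2)) => [->//|ne].
by rewrite (@evec_neq _ _ p.2 q.2) ?mulr0 // => E; apply: ne.
Qed.

Lemma group0 u : (forall p, p \in s -> B p.2 = 0 \/ u p.2 = 0) -> ev s u = 0.
Proof.
move=> H; rewrite grouping big_seq big1 // => p /H [->|->]; by rewrite ?mulr0 ?mul0r.
Qed.

Lemma uniq_rep : (forall Q t, ev s (ext Q (evec R t)) = 0) -> forall h, ev s h = 0.
Proof.
move=> H h; case: (pselect (exists p, p \in s /\ B p.2 != 0)) => [Hex|Hno]; last first.
  apply: group0 => p ps; left; apply/eqP; apply/negPn/negP => Bp; apply: Hno.
  by exists p.
pose P n := `[< exists p, p \in s /\ B p.2 != 0 /\ lev p.2 = n >].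
have exP : exists n, P n.
  by case: Hex => p [ps Bp]; exists (lev p.2); apply/asboolP; exists p.
have ubP : forall n, P n -> (n <= \max_(p <- s) lev p.2)%N.
  move=> n /asboolP [p [ps [_ <-]]].
  exact: (@leq_bigmax_seq _ s xpredT (fun p : R * T => lev p.2) p ps).
case: (ex_maxnP exP ubP) => Q /asboolP [p0 [p0s [Bp0 Hl]]] Qmax.
have := H Q p0.2.
have -> : ev s (ext Q (evec R p0.2)) = B p0.2.
  apply/eqP; rewrite -subr_eq0 -ev_sub; apply/eqP; apply: group0 => p ps.
  case: (pselect (B p.2 = 0)) => Bp; [by left|right].
  have : P (lev p.2) by apply/asboolP; exists p; split => //; split => //; apply/eqP.
  move/Qmax => HQ; rewrite extE ?subrr //; apply/Gam_lev.
  exact: HQ.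
by move=> E; move: Bp0; rewrite E eqxx.
Qed.
End Uniq.


Lemma d_span g : BDspace Gam ext (d g).
Proof.
have -> : d g = dsum [:: (1, g)].
  by apply/funext => t; rewrite /dsum big_cons big_nil mul1r addr0.
exact: dsum_span.
Qed.

Lemma f_dsum g f : is_dstar Gam ext g f -> forall s, f (dsum s) = ev s (evec R g).
Proof.
case=> flin _ fd; elim => [|p s IH].
  rewrite dsum_nil /ev big_nil.
  have X0 : BDspace Gam ext (fun=> 0) by rewrite -dsum_nil; apply: dsum_span.
  have := flin (-1) _ _ X0 X0.
  rewrite (_ : (fun t => -1 * 0 + 0) = fun=> 0); last by apply/funext => t; rewrite mulr0 addr0.
  by rewrite mulN1r addNr.
rewrite dsum_cons flin; [|exact: d_span|exact: dsum_span].
rewrite IH /ev big_cons /d fd //; exact/Delta_lev.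
Qed.

Variable G' : set T.
Hypothesis Hsd : self_determined Gam ext G'.

Lemma key g : G' g -> exists n (a : 'I_n -> R) (eta : 'I_n -> T),
  (forall i, G' (eta i)) /\ forall h, Df g h = \sum_(i < n) a i * h (eta i).
Proof.
move=> Gg; case: Hsd => _ /(_ g Gg) [f [fstar [n [a [eta [Geta Hf]]]]]].
exists n, a, eta; split => // h.
have [sD HD] := Df_ev g.
pose s := [seq (a i, eta i) | i <- enum 'I_n] ++ negs sD.
have evs : forall h, ev s h = \sum_(i < n) a i * h (eta i) - Df g h.
  by move=> h'; rewrite ev_cat ev_negs HD /ev big_map big_enum.
suff : ev s h = 0 by rewrite evs => /eqP; rewrite subr_eq0 => /eqP ->.
apply: uniq_rep => Q t; rewrite evs.
have [s' [_ ->]] := ext_span Q (evec R t).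
rewrite -Hf; last exact: dsum_span.
by rewrite Df_dsum (f_dsum _ _ fstar) subrr.
Qed.

Lemma key_restr g h : G' g -> Df g h = Df g (zext G' h).
Proof.
move=> Gg; have [n [a [eta [Geta Hk]]]] := key g Gg.
rewrite !Hk; apply: eq_bigr => i _; by rewrite zext_in.
Qed.

Lemma F1 g : ~ G' g -> forall t, G' t -> d g t = 0.
Proof.
move=> Gg; suff H : forall n t, (lev t <= n)%N -> G' t -> d g t = 0.
  by move=> t; apply: H (leqnn _).
elim=> [|n IH] t Ht Gt.
  have := key_restr t (d g) Gt; rewrite Df_d evec_neq; last by move=> E; apply: Gg; rewrite E.
  rewrite Df_below ?zext_in //.
  by move=> u; move: Ht; rewrite leqn0 => /eqP ->.
have := key_restr t (d g) Gt; rewrite Df_d evec_neq; last by move=> E; apply: Gg; rewrite E.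
rewrite Df_below ?zext_in //.
move=> u Hu; case: (pselect (G' u)) => Gu; last by rewrite zext_out.
rewrite zext_in // IH //; rewrite -ltnS; exact: leq_trans Hu Ht.
Qed.

Lemma F1span v : in_span Gam ext (~` G') v -> zext G' v = fun=> 0.
Proof.
case/spanP => s [Hs ->]; apply/funext => t.
case: (pselect (G' t)) => Gt; last by rewrite zext_out.
rewrite zext_in // /dsum big_seq big1 // => p /Hs Hp.
by rewrite F1 ?mulr0.
Qed.

Lemma Y_R0 y : closed_span Gam ext (~` G') y -> zext G' y = fun=> 0.
Proof.
move=> Hy; apply/funext => t; case: (pselect (G' t)) => Gt; last by rewrite zext_out.
rewrite zext_in //; apply: small0 => e e0.
have [v [Hv Hn]] := Hy e e0; have := Hn t.
have := congr1 (fun f => f t) (F1span v Hv); rewrite /= zext_in // => ->.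
by rewrite subr0.
Qed.

Lemma Mlem Q z : in_span Gam ext (~` G') (ext Q (zext (~` G') z)).
Proof.
set y := ext Q (zext (~` G') z).
apply/spanP; exists [seq (Df u y, u) | u <- en Q & `[< ~ G' u >]]; split.
  move=> p /mapP [u]; rewrite mem_filter => /andP [/asboolP Hu _] -> //.
rewrite [LHS]ext_expand -/y /dsum; apply/funext => t.
rewrite big_map big_filter [RHS]big_mkcond; apply: eq_big_seq => u /en_mem uin /=.
case: asboolP => // /contrapT Gu.
rewrite (key_restr u y Gu) Df_local ?mul0r // => t' Ht'.
case: (pselect (G' t')) => Gt'; last by rewrite zext_out.
rewrite zext_in // /y extE ?zext_out //.
apply/Gam_lev; apply: leq_trans Ht' _; exact/Gam_lev.
Qed.

Definition Cst : R := projT1 (cid extB).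
Lemma CstP q x M : normle_on (Gam q) x M -> normle (ext q x) (Cst * M).
Proof. exact: (projT2 (cid extB)). Qed.

Lemma Cst_ge1 : 1 <= Cst.
Proof.
have [t0 Ht0] := Gne 0.
have H : normle_on (Gam 0) (evec R t0) 1.
  by move=> t _; rewrite /evec; case: ifP; rewrite ?normr1 ?normr0.
have := CstP 0 _ _ H t0; rewrite extE // evec_eq normr1 mulr1 //.
Qed.

Lemma LIFT s : exists s2, [/\ zext G' (dsum s2) = zext G' (dsum s),
  in_span Gam ext (~` G') (fun t => dsum s t - dsum s2 t) &
  forall M, normle (zext G' (dsum s)) M -> normle (dsum s2) (Cst * M)].
Proof.
pose Q := \max_(p <- s) lev p.2.
have Hs : forall p, p \in s -> (lev p.2 <= Q)%N.
  by move=> p ps; exact: (@leq_bigmax_seq _ s xpredT (fun p : R * T => lev p.2) p ps).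
set v := dsum s.
have [s2 [_ Ew]] := ext_span Q (zext G' v).
exists s2; rewrite -Ew.
have dec : v = fun t => ext Q (zext G' v) t + ext Q (zext (~` G') v) t.
  rewrite -extD {1}(_ : v = ext Q v); last by rewrite /v ext_dsum.
  congr ext; apply/funext => t.
  case: (pselect (G' t)) => Gt.
    by rewrite zext_in // zext_out ?addr0.
  by rewrite zext_out // zext_in // add0r.
split.
- apply/funext => t; rewrite {2}dec.
  case: (pselect (G' t)) => Gt; last by rewrite !zext_out.
  rewrite !zext_in //; have := congr1 (fun f => f t) (F1span _ (Mlem Q v)).
  by rewrite /= zext_in // => ->; rewrite addr0.
- rewrite {1}dec (_ : (fun t => _) = ext Q (zext (~` G') v)); first exact: Mlem.
  by apply/funext => t; rewrite addrC addKr.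
- by move=> M HM; apply: CstP => t _; apply: HM.
Qed.


Lemma span_mono P v : in_span Gam ext P v -> in_span Gam ext setT v.
Proof. by case/spanP => s [_ ->]; apply/spanP; exists s. Qed.

Lemma claimQ5 x M : BDspace Gam ext x -> normle (zext G' x) M ->
  forall e, 0 < e -> exists y, in_span Gam ext (~` G') y /\
    normle (x \- y) (Cst * M + e).
Proof.
move=> Xx HM e e0.
have C1 := Cst_ge1.
have M0 : 0 <= M.
  by have [t0 _] := Gne 0; apply: le_trans (normr_ge0 _) (HM t0).
pose e' := e / (1 + Cst).
have C0 : 0 < 1 + Cst by lra.
have e'0 : 0 < e' by rewrite /e' divr_gt0.
have He : e = e' + Cst * e' by rewrite /e'; field; rewrite gt_eqF.
have [v [Hv Hxv]] := Xx e' e'0.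
have [s [_ Ev]] := (spanP _ _).1 Hv; subst v.
have [s2 [E1 E2 E3]] := LIFT s.
exists (fun t => dsum s t - dsum s2 t); split => // t /=.
have HM' : normle (zext G' (dsum s)) (M + e').
  move=> u; case: (pselect (G' u)) => Gu; last first.
    by rewrite zext_out // normr0; apply: addr_ge0 => //; apply: ltW.
  rewrite zext_in //.
  have := HM u; rewrite zext_in // => H1; have := Hxv u; rewrite /= => H2.
  rewrite (_ : dsum s u = x u - (x u - dsum s u)); last by rewrite opprB addrC subrK.
  by apply: le_trans (ler_normB _ _) _; apply: lerD.
have := E3 _ HM' t; have := Hxv t; rewrite /= => H1 H2.
rewrite (_ : x t - (dsum s t - dsum s2 t) = (x t - dsum s t) + dsum s2 t); last by ring.
apply: le_trans (ler_normD _ _) _.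
rewrite mulrDr in H2; lra.
Qed.

Lemma claim3 x : (BDspace Gam ext x /\ zext G' x = fun=> 0) <->
  closed_span Gam ext (~` G') x.
Proof.
split.
  case=> Xx Rx e e0.
  have H0 : normle (zext G' x) 0 by move=> t; rewrite Rx normr0.
  have [y [Hy Hn]] := claimQ5 x 0 Xx H0 e e0.
  by exists y; split => //; rewrite mulr0 add0r in Hn.
move=> Hx; split; last exact: Y_R0.
move=> e e0; have [v [Hv Hn]] := Hx e e0.
by exists v; split => //; apply: span_mono Hv.
Qed.

Lemma claim4 x y M : BDspace Gam ext x -> closed_span Gam ext (~` G') y ->
  normle (x \- y) M -> normle (zext G' x) M.
Proof.
move=> _ Hy H t; case: (pselect (G' t)) => Gt; last first.
  by rewrite zext_out // normr0; apply: le_trans (normr_ge0 _) (H t).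
have := congr1 (fun f => f t) (Y_R0 y Hy); rewrite /= zext_in // => yt.
by rewrite zext_in //; have := H t; rewrite /= yt subr0.
Qed.


Variable qs : nat -> nat.
Hypothesis Henum : enumerates_q Gam G' qs.

Lemma qs_lt m n : (m < n)%N -> (qs m < qs n)%N.
Proof.
case: Henum => Hinc _.
exact: (@homo_ltn _ qs (fun a b => (a < b)%N) (fun y x z => @ltn_trans y x z) Hinc).
Qed.

Lemma qs_le m n : (qs m <= qs n)%N = (m <= n)%N.
Proof.
case: (leqP m n) => H.
  rewrite leq_eqVlt in H; case/orP: H => [/eqP ->|/qs_lt/ltnW ->] //.
  exact: leqnn.
by apply/negbTE; rewrite -ltnNge; exact: qs_lt.
Qed.

Lemma qs_of g : G' g -> exists s, qs s = lev g.
Proof.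
move=> Gg; case: Henum => _ /(_ (lev g)) [H _]; apply: H.
by exists g; split => //; apply/Delta_lev.
Qed.

Lemma Delta'_iff s g : Delta (Gam' Gam G' qs) s g <-> G' g /\ lev g = qs s.
Proof.
case: s => [|s] /=.
  rewrite /Gam' /setI /=; split.
    case=> Gg /Gam_lev Hl; split => //.
    have [s' Es'] := qs_of g Gg.
    move: Hl; rewrite -Es' qs_le leqn0 => /eqP E; by rewrite E.
  by case=> Gg E; split => //; apply/Gam_lev; rewrite E.
rewrite /Gam' /setD /setI /=; split.
  case=> [[Gg /Gam_lev H1] H2]; split => //.
  have [s' Es'] := qs_of g Gg.
  move: H1; rewrite -Es' qs_le => H1.
  have H3 : ~ (s' <= s)%N.
    by move=> H; apply: H2; split => //; apply/Gam_lev; rewrite -Es' qs_le.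
  have -> // : s' = s.+1.
  by apply/eqP; rewrite eqn_leq H1 /= ltnNge; apply/negP.
case=> Gg E; split; first by split => //; apply/Gam_lev; rewrite E.
case=> _ /Gam_lev; rewrite E qs_le; by rewrite ltnn.
Qed.

Lemma ext'_d s g : Delta (Gam' Gam G' qs) s g ->
  ext' ext Gam G' qs s (evec R g) = zext G' (d g).
Proof.
move=> HD; have [Gg E] := (Delta'_iff s g).1 HD.
rewrite /ext' /d E; congr (zext _ (ext _ _)); apply/funext => t.
case: (pselect (Gam' Gam G' qs s t)) => Ht; first by rewrite zext_in.
rewrite zext_out // evec_neq // => Etg; apply: Ht; rewrite Etg.
by split => //; apply/Gam_lev; rewrite E.
Qed.

Lemma claim1 x : BDspace Gam ext x ->
  BDspace (Gam' Gam G' qs) (ext' ext Gam G' qs) (zext G' x).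
Proof.
move=> Xx e e0; have [v [Hv Hn]] := Xx e e0.
have [s [_ Ev]] := (spanP _ _).1 Hv; subst v.
exists (zext G' (dsum s)); split.
  elim: s {Hv Hn} => [|p s IH].
    rewrite dsum_nil (_ : zext G' _ = fun=> 0); first exact: in_span0.
    by apply/funext => t; rewrite /zext; case: ifP.
  rewrite dsum_cons.
  have -> : zext G' (fun t => p.1 * d p.2 t + dsum s t) =
     (fun t => p.1 * zext G' (d p.2) t + zext G' (dsum s) t).
    apply/funext => t; case: (pselect (G' t)) => Gt; first by rewrite !zext_in.
    by rewrite !zext_out // mulr0 addr0.
  case: (pselect (G' p.2)) => Gp.
    apply: in_span_cons => //.
    have [s' Es'] := qs_of p.2 Gp.
    exists p.2, s'; split => //; split; first by apply/Delta'_iff.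
    by rewrite ext'_d //; apply/Delta'_iff.
  rewrite (_ : (fun t => _) = zext G' (dsum s)) //; apply/funext => t.
  case: (pselect (G' t)) => Gt; last by rewrite !zext_out // mulr0 add0r.
  by rewrite zext_in // F1 // mulr0 add0r.
move=> t /=; case: (pselect (G' t)) => Gt; first by rewrite !zext_in //; apply: Hn.
by rewrite !zext_out // subrr normr0 ltW.
Qed.

Lemma liftspan v' : in_span (Gam' Gam G' qs) (ext' ext Gam G' qs) setT v' ->
  exists s, v' = zext G' (dsum s).
Proof.
case=> n [a [w [Hw ->]]].
have /choice [g Hg] : forall i, exists g, w i = zext G' (d g).
  move=> i; have [g [q [_ [HD ->]]]] := Hw i.
  by exists g; apply: ext'_d.
exists [seq (a i, g i) | i <- enum 'I_n]; apply/funext => t.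
case: (pselect (G' t)) => Gt.
  rewrite zext_in // /dsum big_map big_enum /=; apply: eq_bigr => i _.
  by rewrite Hg zext_in.
rewrite zext_out // big1 // => i _; by rewrite Hg zext_out ?mulr0.
Qed.

Definition eps (k : nat) : R := ((2 : R) ^+ k)^-1.

Lemma eps_gt0 k : 0 < eps k.
Proof. by rewrite /eps invr_gt0 exprn_gt0. Qed.

Lemma epsS k : eps k.+1 = eps k / 2.
Proof. by rewrite /eps exprS invfM mulrC. Qed.

Lemma eps_small r : 0 < r -> exists n, eps n <= r.
Proof.
move=> r0; pose N := Num.bound (r^-1).
have H1 : r^-1 < N%:R by apply: archi_boundP; rewrite invr_ge0 ltW.
have H2 : (N%:R : R) <= 2 ^+ N.
  by rewrite -natrX ler_nat; apply: ltnW; apply: ltn_expl.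
exists N; rewrite /eps -[X in _ <= X]invrK lef_pV2 ?posrE ?exprn_gt0 ?invr_gt0 //.
by apply: ltW; apply: lt_le_trans H1 H2.
Qed.

Lemma claim2 y' : BDspace (Gam' Gam G' qs) (ext' ext Gam G' qs) y' ->
  exists x, BDspace Gam ext x /\ zext G' x = y'.
Proof.
move=> Hy.
have /choice [sk Hsk] : forall k, exists s, normle (y' \- zext G' (dsum s)) (eps k).
  move=> k; have [v' [Hv' Hn]] := Hy (eps k) (eps_gt0 k).
  by have [s Es] := liftspan v' Hv'; exists s; rewrite -Es.
have C1 := Cst_ge1.
have /choice [z Hz] : forall k, exists s2,
    (forall t, G' t -> dsum s2 t = dsum (sk k.+1) t - dsum (sk k) t) /\
    normle (dsum s2) (Cst * (2 * eps k)).
  move=> k; have [s2 [E1 _ E3]] := LIFT (sk k.+1 ++ negs (sk k)).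
  exists s2; split.
    move=> t Gt; have := congr1 (fun f => f t) E1.
    by rewrite /= !zext_in // dsum_cat dsum_negs.
  apply: E3 => t; case: (pselect (G' t)) => Gt; last first.
    rewrite zext_out // normr0 mulr_ge0 //; by apply: ltW; apply: eps_gt0.
  rewrite zext_in // dsum_cat dsum_negs /=.
  have := Hsk k t; have := Hsk k.+1 t; rewrite /= !zext_in // epsS => Ha Hb.
  rewrite (_ : dsum (sk k.+1) t + - dsum (sk k) t =
      - (y' t - dsum (sk k.+1) t) + (y' t - dsum (sk k) t)); last by ring.
  apply: le_trans (ler_normD _ _) _; rewrite normrN.
  have := eps_gt0 k; lra.
pose S := fix S n := if n is n'.+1 then S n' ++ z n' else sk 0.
have SS n : dsum (S n.+1) = fun t => dsum (S n) t + dsum (z n) t.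
  by rewrite /= dsum_cat.
have P1 : forall n t, G' t -> dsum (S n) t = dsum (sk n) t.
  elim=> [//|n IH] t Gt; rewrite SS IH //.
  by have [H _] := Hz n; rewrite H //; ring.
pose K := 4 * Cst.
have P2 n t : `|dsum (S n.+1) t - dsum (S n) t| <= K * eps n - K * eps n.+1.
  rewrite SS /= addrC addKr epsS /K.
  by have [_ H] := Hz n; have := H t; lra.
pose a n t := dsum (S n) t - K * eps n.
pose b n t := dsum (S n) t + K * eps n.
have amon t : forall n m, (n <= m)%N -> a n t <= a m t.
  apply: mono_step => n; have := P2 n t; rewrite /a.
  rewrite ler_norml => /andP [H1 H2]; lra.
have bmon t : forall n m, (n <= m)%N -> b m t <= b n t.
  move=> n m nm; rewrite -lerN2; move: n m nm.
  apply: (@mono_step _ (fun n => - b n t)) => n /=.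
  have := P2 n t; rewrite /b ler_norml => /andP [H1 H2]; lra.
have ab t n m : a n t <= b m t.
  have Hn := amon t n (maxn n m) (leq_maxl _ _).
  have Hm := bmon t m (maxn n m) (leq_maxr _ _).
  have : a (maxn n m) t <= b (maxn n m) t.
    rewrite /a /b; have : 0 <= K * eps (maxn n m).
      by apply: mulr_ge0; [rewrite /K; lra | apply: ltW; apply: eps_gt0].
    lra.
  lra.
pose x t := sup (range (fun n => a n t)).
have xbnd n t : `|x t - dsum (S n) t| <= K * eps n.
  have ne : range (fun n => a n t) !=set0 by exists (a 0%N t), 0%N.
  have hs : has_sup (range (fun n => a n t)).
    by split => //; exists (b 0%N t) => _ [m _ <-]; apply: ab.
  have H1 : a n t <= x t by apply: sup_upper_bound => //; exists n.
  have H2 : x t <= b n t by apply: ge_sup => // _ [m _ <-]; apply: ab.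
  rewrite ler_norml; move: H1 H2; rewrite /a /b => H1 H2; apply/andP; split; lra.
have K0 : 0 < K by rewrite /K; lra.
exists x; split.
  move=> e e0; have [n Hn] := eps_small _ (divr_gt0 e0 K0).
  exists (dsum (S n)); split; first by apply/spanP; exists (S n).
  move=> t; apply: le_trans (xbnd n t) _.
  apply: le_trans (ler_wpM2l (ltW K0) Hn) _.
  by rewrite mulrC divfK ?gt_eqF.
apply/funext => t; case: (pselect (G' t)) => Gt.
  rewrite zext_in //; apply/eqP; rewrite -subr_eq0; apply/eqP; apply: small0 => e e0.
  have K1 : 0 < K + 1 by lra.
  have [n Hn] := eps_small _ (divr_gt0 e0 K1).
  have := xbnd n t; have := Hsk n t; rewrite /= zext_in // -P1 // => H1 H2.
  rewrite (_ : x t - y' t = (x t - dsum (S n) t) - (y' t - dsum (S n) t)); last by ring.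
  apply: le_trans (ler_normB _ _) _.
  have : (K + 1) * eps n <= e.
    apply: le_trans (ler_wpM2l (ltW K1) Hn) _.
    by rewrite mulrC divfK ?gt_eqF.
  lra.
rewrite zext_out //; symmetry; apply: small0 => e e0.
have [n Hn] := eps_small _ e0; have := Hsk n t; rewrite /= zext_out // subr0 => H.
exact: le_trans H Hn.
Qed.

End BDsec.

Theorem main_choice (R : realType) (T : choiceType)
  (Gam : nat -> set T) (ext : nat -> (T -> R) -> (T -> R))
  (G' : set T) (qs : nat -> nat) :
  BD_datum Gam ext ->
  self_determined Gam ext G' ->
  enumerates_q Gam G' qs ->
  let X := BDspace Gam ext in
  let X' := BDspace (Gam' Gam G' qs) (ext' ext Gam G' qs) in
  let Y := closed_span Gam ext (~` G') in
  let Rm := zext G' in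
  (forall x, X x -> X' (Rm x)) /\
  (forall y, X' y -> exists x, X x /\ Rm x = y) /\
  (forall x, (X x /\ Rm x = (fun=> 0)) <-> Y x) /\
  (forall x y M, X x -> Y y -> normle (x \- y) M -> normle (Rm x) M) /\
  (exists c : R, 0 < c /\ forall x M, X x -> normle (Rm x) M ->
     forall e : R, 0 < e -> exists y, Y y /\ normle (x \- y) (c * M + e)).
Proof.
move=> HBD Hsd Henum X X' Y Rm.
split; first exact: claim1.
split; first exact: claim2.
split; first exact: claim3.
split; first exact: claim4.
exists (Cst R T Gam ext HBD); split; first by have := Cst_ge1 R T Gam ext HBD; lra.
move=> x M Xx HM e e0.
have [y [Hy Hn]] := claimQ5 R T Gam ext HBD G' Hsd x M Xx HM e e0.
by exists y; split => //; apply: span_closed.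
Qed.

Theorem proposition1p12 (R : realType) (T : Type)
  (Gam : nat -> set T) (ext : nat -> (T -> R) -> (T -> R))
  (G' : set T) (qs : nat -> nat) :
  BD_datum Gam ext ->
  self_determined Gam ext G' ->
  enumerates_q Gam G' qs ->
  let X := BDspace Gam ext in
  let X' := BDspace (Gam' Gam G' qs) (ext' ext Gam G' qs) in
  let Y := closed_span Gam ext (~` G') in
  let Rm := zext G' in
  (* R maps X onto X' *)
  (forall x, X x -> X' (Rm x)) /\
  (forall y, X' y -> exists x, X x /\ Rm x = y) /\
  (* the kernel of R restricted to X is Y *)
  (forall x, (X x /\ Rm x = (fun=> 0)) <-> Y x) /\
  (* hence the induced map X/Y -> X', [x] |-> R x, is an isomorphism:
     it is bounded (by 1) and bounded below w.r.t. the quotient norm *)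
  (forall x y M, X x -> Y y -> normle (x \- y) M -> normle (Rm x) M) /\
  (exists c : R, 0 < c /\ forall x M, X x -> normle (Rm x) M ->
     forall e : R, 0 < e -> exists y, Y y /\ normle (x \- y) (c * M + e)).
Proof.
move: Gam ext G' qs; elim/Pchoice: T => T Gam ext G' qs.

exact: (@main_choice R T Gam ext G' qs).
Qed.
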